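(* Let $\mathbb{K}$ be a non-Archimedean valued field and $G$ a compactly generated topological group. Then for every normed $\mathbb{K}[G]$-module $E$, the comparison map $c^2 : H^2_{cb}(G, E) \to H^2_c(G, E)$ is injective.
   Context: A non-Archimedean valued field is a field with an absolute value satisfying the ultrametric inequality. A normed $\mathbb{K}[G]$-module is a $\mathbb{K}$-vector space with an ultrametric norm ($\|x\|=0$ iff $x=0$, $\|x+y\|\le\max$, $\|\alpha x\|=|\alpha|_\mathbb{K}\|x\|$) on which $G$ acts by linear isometries. Bar resolution: $\overline{C}^0(G,E)=\overline{C}^0_b(G,E)=E$, and for $n\ge1$, $\overline{C}^n(G,E)$ is the space of continuous maps $G^n\to E$ and $\overline{C}^n_b(G,E)$ its subspace of bounded ones; coboundary $\delta^0v(g)=g\cdot v-v$ and $\delta^nf(g_1,\dots,g_{n+1})=g_1\cdot f(g_2,\dots,g_{n+1})+\sum_{i=1}^n(-1)^if(g_1,\dots,g_ig_{i+1},\dots,g_{n+1})+(-1)^{n+1}f(g_1,\dots,g_n)$. $H^\bullet_c(G,E)$ and $H^\bullet_{cb}(G,E)$ are the cohomologies of these complexes, and the comparison map $c^\bullet$ is induced by the inclusion $\overline{C}^\bullet_b\subset\overline{C}^\bullet$. *)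

(* Defs.v *)
From HB Require Import structures.
From mathcomp Require Import all_boot all_order all_algebra.
From mathcomp Require Import all_classical all_reals topology.
Set Implicit Arguments. Unset Strict Implicit. Unset Printing Implicit Defensive.
Import Order.TTheory GRing.Theory Num.Theory.
Local Open Scope classical_set_scope.
Local Open Scope ring_scope.

Record nonarch_abs (R : realType) (K : fieldType) (absK : K -> R) : Prop := {
  abs_ge0 : forall x, 0 <= absK x;
  abs_eq0 : forall x, absK x = 0 <-> x = 0;
  abs_mul : forall x y, absK (x * y) = absK x * absK y;
  abs_ultra : forall x y, absK (x + y) <= Num.max (absK x) (absK y) }.

Record is_topgroup (G : topologicalType) (mul : G -> G -> G) (inv : G -> G)
    (one : G) : Prop := {
  tg_assoc : forall x y z, mul x (mul y z) = mul (mul x y) z;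
  tg_mul1g : forall x, mul one x = x;
  tg_mulg1 : forall x, mul x one = x;
  tg_mulVg : forall x, mul (inv x) x = one;
  tg_mulgV : forall x, mul x (inv x) = one;
  tg_mul_cont : continuous (fun p : G * G => mul p.1 p.2);
  tg_inv_cont : continuous inv }.

Definition is_subgroup (G : Type) (mul : G -> G -> G) (inv : G -> G) (one : G)
    (S : set G) : Prop :=
  S one /\ (forall x y, S x -> S y -> S (mul x y)) /\ (forall x, S x -> S (inv x)).

Definition generated (G : Type) (mul : G -> G -> G) (inv : G -> G) (one : G)
    (A : set G) : set G :=
  fun x => forall S, is_subgroup mul inv one S -> A `<=` S -> S x.

Definition compactly_generated (G : topologicalType) (mul : G -> G -> G)
    (inv : G -> G) (one : G) : Prop :=
  exists A : set G, compact A /\ generated mul inv one A = setT.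

Record normed_KG_module (R : realType) (K : fieldType) (absK : K -> R)
    (G : Type) (mul : G -> G -> G) (one : G)
    (E : lmodType K) (nE : E -> R) (act : G -> E -> E) : Prop := {
  norm_eq0 : forall x, nE x = 0 <-> x = 0;
  norm_ultra : forall x y, nE (x + y) <= Num.max (nE x) (nE y);
  norm_scale : forall (a : K) x, nE (a *: x) = absK a * nE x;
  act_add : forall g x y, act g (x + y) = act g x + act g y;
  act_scale : forall g (a : K) x, act g (a *: x) = a *: act g x;
  act_isom : forall g x, nE (act g x) = nE x;
  act_one : forall x, act one x = x;
  act_mul : forall g h x, act (mul g h) x = act g (act h x) }.

Definition ncontinuous (R : realType) (T : topologicalType) (E : zmodType)
    (nE : E -> R) (f : T -> E) : Prop :=
  forall x (eps : R), 0 < eps -> \forall y \near x, nE (f y - f x) < eps.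

Definition nbounded (R : realType) (T : Type) (E : zmodType) (nE : E -> R)
    (f : T -> E) : Prop := exists M : R, forall x, nE (f x) <= M.

(* Coboundaries of the inhomogeneous bar resolution in degrees 1 and 2. *)
Definition delta1 (G : Type) (E : zmodType) (mul : G -> G -> G)
    (act : G -> E -> E) (f : G -> E) : G * G -> E :=
  fun p => act p.1 (f p.2) - f (mul p.1 p.2) + f p.1.

Definition delta2 (G : Type) (E : zmodType) (mul : G -> G -> G)
    (act : G -> E -> E) (f : G * G -> E) : G * G * G -> E :=
  fun t => let: (g1, g2, g3) := t in
    act g1 (f (g2, g3)) - f (mul g1 g2, g3) + f (g1, mul g2 g3) - f (g1, g2).

Definition bcocycle2 (R : realType) (G : topologicalType) (E : zmodType)
    (nE : E -> R) (mul : G -> G -> G) (act : G -> E -> E) (f : G * G -> E) :=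
  ncontinuous nE f /\ nbounded nE f /\ (forall t, delta2 mul act f t = 0).

Definition c_coboundary2 (R : realType) (G : topologicalType) (E : zmodType)
    (nE : E -> R) (mul : G -> G -> G) (act : G -> E -> E) (f : G * G -> E) :=
  exists h : G -> E, ncontinuous nE h /\ forall p, f p = delta1 mul act h p.

Definition cb_coboundary2 (R : realType) (G : topologicalType) (E : zmodType)
    (nE : E -> R) (mul : G -> G -> G) (act : G -> E -> E) (f : G * G -> E) :=
  exists h : G -> E, ncontinuous nE h /\ nbounded nE h /\
    forall p, f p = delta1 mul act h p.

(* Injectivity of c^2 : H^2_cb -> H^2_c, [f]_cb |-> [f]_c, expressed on
   representatives: two bounded cocycles with the same image in H^2_c
   (difference in B^2_c) have the same class in H^2_cb (difference in B^2_cb). *)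
Definition comparison2_injective (R : realType) (G : topologicalType)
    (E : zmodType) (nE : E -> R) (mul : G -> G -> G) (act : G -> E -> E) :=
  forall f1 f2 : G * G -> E,
    bcocycle2 nE mul act f1 -> bcocycle2 nE mul act f2 ->
    c_coboundary2 nE mul act (fun p => f1 p - f2 p) ->
    cb_coboundary2 nE mul act (fun p => f1 p - f2 p).

(* Main.v *)
Require Import Defs.
From HB Require Import structures.
From mathcomp Require Import all_boot all_order all_algebra.
From mathcomp Require Import all_classical all_reals topology.
From mathcomp Require Import normedtype lra.
Import Order.TTheory GRing.Theory Num.Theory.
Local Open Scope classical_set_scope.
Local Open Scope ring_scope.

Lemma sum_ge_elem (R : realType) (T : eqType) (s : seq T) (F : T -> R) x :
  x \in s -> F x <= \sum_(j <- s) `|F j|.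
Proof.
elim: s => [//|a s IH]; rewrite inE big_cons => /orP [/eqP ->|/IH h].
  have : 0 <= \sum_(j <- s) `|F j| by apply: sumr_ge0.
  have := ler_norm (F a). lra.
have := normr_ge0 (F a). lra.
Qed.

Theorem corollary8p8 (R : realType) (K : fieldType) (absK : K -> R)
  (hK : nonarch_abs absK)
  (G : topologicalType) (mul : G -> G -> G) (inv : G -> G) (one : G)
  (hG : is_topgroup mul inv one) (hcg : compactly_generated mul inv one)
  (E : lmodType K) (nE : E -> R) (act : G -> E -> E)
  (hE : normed_KG_module absK mul one nE act) :
  comparison2_injective nE mul act.
Proof.
have abs1 : absK 1 = 1.
  have h := abs_mul hK 1 1; rewrite mulr1 in h.
  have n0 : absK 1 <> 0 by move/(abs_eq0 hK); apply/eqP; exact: oner_neq0.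
  have : absK 1 * (absK 1 - 1) = 0 by rewrite mulrBr mulr1 -h subrr.
  by move/eqP; rewrite mulf_eq0 subr_eq0 => /orP [/eqP//|/eqP].
have absN1 : absK (-1) = 1.
  have h := abs_mul hK (-1) (-1); rewrite mulrNN mulr1 abs1 in h.
  have := abs_ge0 hK (-1). nra.
have nEN : forall x, nE (- x) = nE x.
  by move=> x; rewrite -scaleN1r (norm_scale hE) absN1 mul1r.
have nEB : forall x y, nE (x - y) <= Num.max (nE x) (nE y).
  by move=> x y; rewrite -(nEN y); apply: (norm_ultra hE).
move=> f1 f2 [_ [[M1 hM1] _]] [_ [[M2 hM2] _]] [h [hc hf]].
exists h; split => //; split => //.
set D := Num.max M1 M2.
have fD : forall p, nE (f1 p - f2 p) <= D.
  move=> p; apply: le_trans (nEB _ _) _.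
  by rewrite ge_max !le_max hM1 hM2 orbT.
have [A [Ac AG]] := hcg.
have [C hC] : exists C, forall y, A y -> nE (h y) <= C.
  have := (proj1 (compact_near_coveringP A) Ac) R (pinfty_nbhs R)
    (fun M y => nE (h y) <= M) _.
  case.
  - move=> x Ax.
    exists ([set y | nE (h y - h x) < 1], [set M | Num.max 1 (nE (h x)) < M]).
      split; first exact: hc.
      by exists (Num.max 1 (nE (h x))); split => //; exact: num_real.
    move=> [y M] [/= hy hM].
    have -> : h y = (h y - h x) + h x by rewrite subrK.
    apply: le_trans (norm_ultra hE _ _) _; apply: ltW; apply: le_lt_trans hM.
    by rewrite ge_max !le_max (ltW hy) lexx orbT.
  - move=> M0 [_ hM0]; exists (M0 + 1); apply: hM0; rewrite ltrDl; exact: ltr01.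
set M := Num.max C D.
have f11 : nE (h one) <= D.
  have := fD (one, one); rewrite hf /delta1 /= (act_one hE) (tg_mul1g hG).
  by rewrite subrK.
have DM : D <= M by rewrite le_max lexx orbT.
have sub : is_subgroup mul inv one [set x | nE (h x) <= M].
  split; [|split] => /=.
  - exact: le_trans f11 DM.
  - move=> x y hx hy.
    have e : h (mul x y) = act x (h y) + h x - (f1 (x, y) - f2 (x, y)).
      by rewrite hf /delta1 /= opprD addrACA subrr addr0 opprB addrC subrK.
    rewrite e; apply: le_trans (nEB _ _) _; rewrite ge_max.
    apply/andP; split; last exact: le_trans (fD _) DM.
    apply: le_trans (norm_ultra hE _ _) _.
    by rewrite ge_max (act_isom hE) hx hy.
  - move=> x hx.
    have e : act x (h (inv x)) = (f1 (x, inv x) - f2 (x, inv x)) + h one - h x.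
      by rewrite hf /delta1 /= (tg_mulgV hG) addrAC addrK subrK.
    rewrite -(act_isom hE x) e; apply: le_trans (nEB _ _) _; rewrite ge_max hx andbT.
    apply: le_trans (norm_ultra hE _ _) _.
    by rewrite ge_max (le_trans (fD _) DM) (le_trans f11 DM).
exists M => x.
have : generated mul inv one A x by rewrite AG.
move=> /(_ _ sub); apply => y Ay /=.
by rewrite le_max hC.
Qed.
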